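(* Let $a$ and $i$ be positive integers. Then $$\binom{3a+i}{a+i}=\sum_{k\geq0}\frac{i+3k}{i+k}\binom{i+k}{2k}\binom{3a+i}{a-k}=\sum_{k\geq0}\left[\binom{i+k}{2k}+\binom{i+k-1}{2k-1}\right]\binom{3a+i}{a-k}.$$
   Context: Ordinary binomial coefficients, with $\binom{n}{m}=0$ when $m<0$ or $m>n$. *)

(* Defs.v *)
From mathcomp Require Import all_boot all_order all_algebra.
Set Implicit Arguments. Unset Strict Implicit. Unset Printing Implicit Defensive.
Import Order.TTheory GRing.Theory Num.Theory.

(* Binomial coefficient with integer arguments: binomZ n m = 'C(n, m) for
   n, m >= 0, and 0 when m < 0 (or n < 0, not needed here). *)
Definition binomZ (n m : int) : nat :=
  match n, m with
  | Posz n', Posz m' => 'C(n', m')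
  | _, _ => 0
  end.

(* Main.v *)
Require Import Defs.
From mathcomp Require Import all_boot all_order all_algebra.
From mathcomp Require Import ring lra zify.
Import Order.TTheory GRing.Theory Num.Theory.
Local Open Scope ring_scope.

Lemma bz n m : binomZ (Posz n - 1) (Posz m - 1) = if m is m'.+1 then (if n is n'.+1 then 'C(n',m') else 0%N) else 0%N.
Proof. by case: n => [|n]; case: m => [|m] //=; rewrite !subn1. Qed.

Definition cc (i k : nat) : nat :=
  ('C(i + k, 2 * k) + binomZ (Posz (i + k) - 1) (Posz (2 * k) - 1))%N.
Definition dd (i k : nat) : nat := if k is j.+1 then 'C(i + j, 2 * j) else 0%N.
Definition pp (x : rat) (i k : nat) : rat :=
  (\prod_(t < i + k) (x - k%:R + 1 + t%:R)) / (\prod_(t < i + k) (x *+ 2 + 1 + t%:R)).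

Lemma cc0 i : cc i 0 = 1%N.
Proof. by rewrite /cc addn0 muln0 bz bin0. Qed.

Lemma ccS i j : cc i j.+1 = ('C((i + j).+1, (2 * j).+2) + 'C(i + j, (2 * j).+1))%N.
Proof.
rewrite /cc bz addnS.
by have -> : (2 * j.+1 = (2 * j).+2)%N by lia.
Qed.

Lemma E1 i j : ('C((i + j).+2, (2 * j).+2) + 'C((i+j).+1, (2 * j).+1)
   + 'C((i + j).+1, (2 * j).+2) =
   2 * ('C((i + j).+1, (2 * j).+2) + 'C(i + j, (2 * j).+1)) + 2 * 'C(i + j, 2 * j))%N.
Proof. rewrite (binS (i+j).+1) (binS (i+j) (2*j)). lia. Qed.

Lemma E2 i j :
  let D := ('C((i + j).+2, (2 * j).+2))%:R : rat in
  let B := ('C((i + j).+1, (2 * j).+1))%:R : rat in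
  let Cc := ('C((i + j).+1, (2 * j).+2))%:R : rat in
  let A := ('C(i + j, (2 * j).+1))%:R : rat in
  let X := ('C(i + j, 2 * j))%:R : rat in
  (D + B) * (i.+1)%:R = (Cc + A) * (i + j).+2%:R + (j.+1)%:R * Cc + X * (i + j).+2%:R.
Proof.
move=> D B Cc A X.
case: (ltnP i j) => hij.
  rewrite /D /B /Cc /A /X !bin_small; try lia. by rewrite !mul0r !mulr0 !addr0.
have [e he] : exists e, i = (j + e)%N by exists (i - j)%N; lia.
have R1 := mul_bin_left (i + j) (2 * j).
have R2 := mul_bin_diag (i + j).+1 (2 * j).
have R3 := mul_bin_left (i + j).+1 (2 * j).+1.
have R4 := mul_bin_diag (i + j).+2 (2 * j).+1.
have e1 : (i + j - 2 * j = e)%N by lia.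
have e2 : ((i + j).+1 - (2 * j).+1 = e)%N by lia.
rewrite e1 in R1. rewrite e2 in R3. simpl in R2, R4.
move/(congr1 (fun n => n%:R : rat)): R1. move/(congr1 (fun n => n%:R : rat)): R2.
move/(congr1 (fun n => n%:R : rat)): R3. move/(congr1 (fun n => n%:R : rat)): R4.
rewrite !natrM -/D -/B -/Cc -/A -/X => R4 R3 R2 R1.
have hB : B = (i + j).+1%:R * X / (2 * j).+1%:R.
  rewrite R2; field; apply: lt0r_neq0; have := ler0n rat j; lra.
have hA : A = e%:R * X / (2 * j).+1%:R.
  rewrite -R1; field; apply: lt0r_neq0; have := ler0n rat j; lra.
have hCc : Cc = e%:R * B / (2 * j).+2%:R.
  rewrite -R3; field; apply: lt0r_neq0; have := ler0n rat j; lra.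
have hD : D = (i + j).+2%:R * B / (2 * j).+2%:R.
  rewrite R4; field; apply: lt0r_neq0; have := ler0n rat j; lra.
rewrite hD hCc hA hB he.
rewrite !(natrD, natrM, mulrS).
field.
by apply/andP; split; apply: lt0r_neq0; have := ler0n rat j; lra.
Qed.

Lemma E1r i j : ('C((i + j).+2, (2 * j).+2))%:R + ('C((i+j).+1, (2 * j).+1))%:R
   + ('C((i + j).+1, (2 * j).+2))%:R =
   2 * (('C((i + j).+1, (2 * j).+2))%:R + ('C(i + j, (2 * j).+1))%:R) + 2 * ('C(i + j, 2 * j))%:R :> rat.
Proof.
move: (E1 i j).
move: ('C((i + j).+2, (2 * j).+2)) ('C((i+j).+1, (2 * j).+1)) ('C((i + j).+1, (2 * j).+2))
  ('C(i + j, (2 * j).+1)) ('C(i + j, 2 * j)) => a1 a2 a3 a4 a5 h.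
have h' : (a1 + a2 + a3)%:R = (2*(a3+a4) + 2*a5)%:R :> rat by rewrite h.
rewrite (natrD _ (2 * (a3 + a4))) !(natrM _ 2) !natrD in h'. exact h'.
Qed.

Lemma key (x : rat) i k :
  (cc i.+1 k)%:R * (x + i.+1%:R) =
  (cc i k)%:R * (x *+ 2 + 1 + (i + k)%:R) + (dd i k)%:R * (x *+ 2 + 1 + (i + k)%:R)
  - (dd i k.+1)%:R * (x - k%:R).
Proof.
case: k => [|j].
  rewrite !cc0 /dd !addn0 muln0 bin0 subr0. rewrite !mulrS. ring.
rewrite !ccS /dd addSn.
have -> : (2 * j.+1 = (2 * j).+2)%N by lia.
rewrite addnS.
have h1 := E1r i j. have h2 := E2 i j. cbv zeta in h2.
move: h1 h2.
move: ('C((i + j).+2, (2 * j).+2)) ('C((i+j).+1, (2 * j).+1)) ('C((i + j).+1, (2 * j).+2))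
  ('C(i + j, (2 * j).+1)) ('C(i + j, 2 * j)) => a1 a2 a3 a4 a5.
rewrite !natrD.
move: (a1%:R) (a2%:R) (a3%:R) (a4%:R) (a5%:R) => D B Cc A X h1 h2.
suff H : (D + B + Cc - (2*(Cc+A) + 2*X)) * x + ((D + B) * i.+1%:R - ((Cc + A) * (i + j).+2%:R + j.+1%:R * Cc + X * (i + j).+2%:R)) = 0.
  apply/eqP; rewrite -subr_eq0; apply/eqP; rewrite -[X in _ = X]H.
  rewrite !(natrD, mulrS). ring.
by rewrite h1 h2 !subrr mul0r add0r.
Qed.

Lemma den_gt0 (x : rat) n : 0 <= x -> 0 < \prod_(t < n) (x *+ 2 + 1 + t%:R).
Proof.
move=> hx; apply: prodr_gt0 => t _. have := ler0n rat t. rewrite mulr2n. lra.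
Qed.

Lemma pp_i (x : rat) i k : 0 <= x ->
  pp x i.+1 k * (x *+ 2 + 1 + (i + k)%:R) = pp x i k * (x + i.+1%:R).
Proof.
move=> hx; rewrite /pp addSn !big_ord_recr /=.
have h1 := den_gt0 x (i + k) hx.
have h2 : 0 < x *+ 2 + 1 + (i + k)%:R.
  have := ler0n rat (i + k). rewrite mulr2n. lra.
rewrite -addn1 !natrD. field.
apply/andP; split; [exact: lt0r_neq0 h1 | apply: lt0r_neq0; have := ler0n rat i; have := ler0n rat k; lra].
Qed.

Lemma pp_k (x : rat) i k : 0 <= x ->
  pp x i k.+1 * (x *+ 2 + 1 + (i + k)%:R) = pp x i k * (x - k%:R).
Proof.
move=> hx; rewrite /pp addnS big_ord_recl big_ord_recr /=.
have h1 := den_gt0 x (i + k) hx.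
have h2 : 0 < x *+ 2 + 1 + (i + k)%:R.
  have := ler0n rat (i + k). rewrite mulr2n. lra.
rewrite (eq_bigr (fun t : 'I_(i+k) => x - k%:R + 1 + t%:R)); last first.
  move=> t _; have -> : bump 0 t = t.+1 by [].
  rewrite -(addn1 t) -(addn1 k) !natrD. ring.
rewrite -(addn1 k) !natrD mulr0n addr0.
field.
apply/andP; split; [exact: lt0r_neq0 h1 | apply: lt0r_neq0; have := ler0n rat i; have := ler0n rat k; lra].
Qed.

Lemma pp00 (x : rat) : pp x 0 0 = 1.
Proof. by rewrite /pp !big_ord0 divr1. Qed.

Lemma step (x : rat) i k : 0 <= x ->
  (cc i.+1 k)%:R * pp x i.+1 k =
  (cc i k)%:R * pp x i k + ((dd i k)%:R * pp x i k - (dd i k.+1)%:R * pp x i k.+1).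
Proof.
move=> hx.
have hb : x *+ 2 + 1 + (i + k)%:R != 0.
  apply: lt0r_neq0; have := ler0n rat (i + k). rewrite mulr2n. lra.
apply: (mulIf hb).
rewrite -mulrA pp_i //.
have -> : ((cc i k)%:R * pp x i k + ((dd i k)%:R * pp x i k - (dd i k.+1)%:R * pp x i k.+1))
   * (x *+ 2 + 1 + (i + k)%:R) =
   pp x i k * ((cc i k)%:R * (x *+ 2 + 1 + (i + k)%:R) + (dd i k)%:R * (x *+ 2 + 1 + (i + k)%:R))
   - (dd i k.+1)%:R * (pp x i k.+1 * (x *+ 2 + 1 + (i + k)%:R)) by ring.
rewrite pp_k // mulrCA key. ring.
Qed.

Lemma mainsum (x : rat) i M : 0 <= x -> (i < M)%N ->
  \sum_(0 <= k < M) (cc i k)%:R * pp x i k = 1.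
Proof.
move=> hx; elim: i M => [|i IH] M hM.
  case: M hM => // M _.
  rewrite big_nat_recl // cc0 pp00 mulr1 big1 ?addr0 // => k _.
  rewrite ccS !bin_small ?mul0r //; lia.
have hM' : (i < M)%N by lia.
rewrite (eq_bigr _ (fun k _ => step x i k hx)) big_split /= IH //.
rewrite (telescope_sumr_eq (fun k => - ((dd i k)%:R * pp x i k))) //; last first.
  move=> k _; ring.
case: M hM hM' => // M hM _.
rewrite /dd bin_small; last by lia.
by rewrite !mul0r subrr addr0.
Qed.

Lemma pp0bin a i : pp a%:R i 0 * ('C(3*a + i, a + i))%:R = ('C(3*a+i, a))%:R.
Proof.
elim: i => [|i IH]; first by rewrite pp00 mul1r !addn0.
have hx : 0 <= a%:R :> rat by exact: ler0n.
have h := pp_i (a%:R) i 0 hx.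
have R1 := mul_bin_diag (3*a+i).+1 (a+i).
have R2 := mul_bin_down (3*a+i).+1 a.
rewrite !addnS.
have e : ((3*a+i).+1 - a = (2*a+i).+1)%N by lia.
rewrite e in R2. rewrite succnK in R1 R2.
move: IH h R1 R2.
move: ('C(3*a+i, a+i)) ('C(3*a+i,a)) ('C((3*a+i).+1, (a+i).+1)) ('C((3*a+i).+1, a)) => c1 c2 c3 c4.
move: (pp a%:R i.+1 0) (pp a%:R i 0) => P1 P0.
move=> IH h R1 R2.
have R1' : ((3*a+i).+1)%:R * c1%:R = ((a+i).+1)%:R * c3%:R :> rat by rewrite -!natrM R1.
have R2' : ((3*a+i).+1)%:R * c2%:R = ((2*a+i).+1)%:R * c4%:R :> rat by rewrite -!natrM R2.
have ha := ler0n rat a. have hi := ler0n rat i.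
have hc3 : c3%:R = ((3*a+i).+1)%:R * c1%:R / ((a+i).+1)%:R :> rat.
  by rewrite R1'; field; apply: lt0r_neq0; lra.
have hc4 : c4%:R = ((3*a+i).+1)%:R * c2%:R / ((2*a+i).+1)%:R :> rat.
  by rewrite R2'; field; apply: lt0r_neq0; lra.
have hb : a%:R *+ 2 + 1 + (i + 0)%:R != 0 :> rat.
  rewrite addn0 mulr2n; apply: lt0r_neq0; lra.
have hP1 : P1 = P0 * (a%:R + i.+1%:R) / (a%:R *+ 2 + 1 + (i + 0)%:R).
  by rewrite -h mulfK.
rewrite hP1 hc3 hc4 -IH addn0.
field.
by apply/andP; split; apply: lt0r_neq0; lra.
Qed.

Lemma pp_bin a i k : (k <= a)%N ->
  pp a%:R i k * ('C(3*a + i, a + i))%:R = ('C(3*a+i, a - k))%:R.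
Proof.
elim: k => [|k IH] hk; first by rewrite subn0 pp0bin.
have hx : 0 <= a%:R :> rat by exact: ler0n.
have h := pp_k (a%:R) i k hx.
have R := mul_bin_left (3*a+i) (a - k.+1).
have e1 : ((a - k.+1).+1 = a - k)%N by lia.
have e2 : (3*a+i - (a - k.+1) = (2*a+i+k).+1)%N by lia.
rewrite e1 e2 in R.
have := IH (ltnW hk).
move: h R.
move: ('C(3*a+i, a+i)) ('C(3*a+i,a-k)) ('C(3*a+i, a-k.+1)) => c d0 d1.
move: (pp a%:R i k.+1) (pp a%:R i k) => P1 P0.
move=> h R IH'.
have R' : (a - k)%:R * d0%:R = ((2*a+i+k).+1)%:R * d1%:R :> rat by rewrite -!natrM R.
rewrite natrB in R'; last by lia.
have ha := ler0n rat a. have hi := ler0n rat i. have hk' := ler0n rat k.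
have hd1 : d1%:R = (a%:R - k%:R) * d0%:R / ((2*a+i+k).+1)%:R :> rat.
  by rewrite R'; field; apply: lt0r_neq0; lra.
have hb : a%:R *+ 2 + 1 + (i + k)%:R != 0 :> rat.
  rewrite mulr2n natrD; apply: lt0r_neq0; lra.
have hP1 : P1 = P0 * (a%:R - k%:R) / (a%:R *+ 2 + 1 + (i + k)%:R).
  by rewrite -h mulfK.
rewrite hP1 hd1 -IH'.
field.
by repeat (apply/andP; split); apply: lt0r_neq0; lra.
Qed.

Lemma pp_zero a i d : pp a%:R i (a + d).+1 = 0.
Proof.
have hx : 0 <= a%:R :> rat by exact: ler0n.
have hb : forall k, a%:R *+ 2 + 1 + (i + k)%:R != 0 :> rat.
  move=> k; have := ler0n rat (i + k); rewrite mulr2n; move=> ?; apply: lt0r_neq0; lra.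
elim: d => [|d IH].
  have := pp_k a%:R i (a + 0) hx; rewrite addn0 subrr mulr0.
  by move/eqP; rewrite mulf_eq0 (negbTE (hb _)) orbF => /eqP.
rewrite addnS; have := pp_k a%:R i (a + d).+1 hx; rewrite IH mul0r.
by move/eqP; rewrite mulf_eq0 (negbTE (hb _)) orbF => /eqP.
Qed.

Lemma part2 a i : ('C(3*a + i, a + i))%:R =
  \sum_(0 <= k < a.+1) (cc i k)%:R * ('C(3*a+i, a-k))%:R :> rat.
Proof.
have hx : 0 <= a%:R :> rat by exact: ler0n.
have H := mainsum (a%:R) i (a + i).+1 hx (ltac:(lia)).
rewrite -[LHS]mul1r -{1}H mulr_suml.
rewrite (big_cat_nat _ (n := a.+1)) //=; last by lia.
rewrite [X in _ + X]big1_seq ?addr0.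
  apply: eq_big_nat => k /andP[_ hk]; rewrite -mulrA pp_bin //.
move=> k /andP[_]; rewrite mem_index_iota => /andP[hk _].
have -> : k = (a + (k - a.+1)).+1 by lia.
by rewrite pp_zero mulr0 mul0r.
Qed.

Lemma termeq i k : (0 < i)%N ->
  ((i + 3 * k)%:R / (i + k)%:R) * ('C(i + k, 2 * k))%:R = (cc i k)%:R :> rat.
Proof.
move=> hi.
case: k => [|j].
  rewrite cc0 !addn0 muln0 bin0 mulr1 divff // pnatr_eq0; lia.
rewrite ccS.
have R := mul_bin_diag (i + j).+1 (2 * j).+1.
rewrite succnK in R.
have -> : (i + j.+1 = (i + j).+1)%N by lia.
have -> : (2 * j.+1 = (2 * j).+2)%N by lia.
move: R; move: ('C(i + j, (2 * j).+1)) ('C((i + j).+1, (2 * j).+2)) => c1 c2 R.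
have R' : ((i + j).+1)%:R * c1%:R = ((2*j).+2)%:R * c2%:R :> rat by rewrite -!natrM R.
have hc1 : c1%:R = ((2*j).+2)%:R * c2%:R / ((i + j).+1)%:R :> rat.
  by rewrite -R'; field; apply: lt0r_neq0; have := ler0n rat i; have := ler0n rat j; lra.
rewrite (natrD _ c2 c1) hc1.
field.
by repeat (apply/andP; split); apply: lt0r_neq0; have := ler0n rat i; have := ler0n rat j; lra.
Qed.

Theorem lemma2 (a i : nat) (ha : (0 < a)%N) (hi : (0 < i)%N) :
  ('C(3 * a + i, a + i))%:R =
    \sum_(0 <= k < a.+1)
      (((i + 3 * k)%:R / (i + k)%:R) * ('C(i + k, 2 * k))%:R
        * ('C(3 * a + i, a - k))%:R : rat)
  /\
  ('C(3 * a + i, a + i))%:R =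
    \sum_(0 <= k < a.+1)
      ((('C(i + k, 2 * k) + binomZ (Posz (i + k) - 1) (Posz (2 * k) - 1))%N)%:R
        * ('C(3 * a + i, a - k))%:R : rat).
Proof.
split; last exact: part2.
rewrite part2; apply: eq_big_nat => k _; by rewrite termeq.
Qed.
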